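(* Let $\omega\in S_n$. If $M_\omega$ contains a $C_4$-parallelogram-pattern poset, then $M_\omega$ contains a parallelogram-pattern poset.
   Context: Permutations $\omega\in S_n$ are written in one-line notation. Let ${\rm Inv}(\omega)=\{(i,j): 1\le i<j\le n,\ \omega(i)>\omega(j)\}$, $c_i(\omega)=\#\{j: i<j\le n,\ \omega(i)>\omega(j)\}$, and for $i<j$, $c_{i,j}(\omega)=\#\{k: i<k<j,\ \omega(i)>\omega(k)\}$; $[m]=\{1,\dots,m\}$. For $i$ with $c_i(\omega)>0$ and $x\in[c_i(\omega)]$, $m_{i,x}(\omega)\in\mathbb{N}^n$ has $j$-th coordinate $0$ if $j<i$; $x$ if $j=i$; $0$ if $j>i$ and $(i,j)\in{\rm Inv}(\omega)$; $\max\{0,x-c_{i,j}(\omega)\}$ if $j>i$ and $(i,j)\notin{\rm Inv}(\omega)$. $M_\omega$ is the set of all such $m_{i,x}(\omega)$, ordered by the product order on $\mathbb{N}^n$. For $1\le i<j\le n$, $b<a$ in $[c_i(\omega)]$ and $c<d$ in $[c_j(\omega)]$ with $a+c=b+d$, the set $\{m_{i,a}(\omega),m_{i,b}(\omega),m_{j,c}(\omega),m_{j,d}(\omega)\}$ is a parallelogram-pattern poset if $m_{i,a}(\omega)>m_{j,d}(\omega)$, $m_{i,b}(\omega)>m_{j,c}(\omega)$, and $m_{i,b}(\omega)$, $m_{j,d}(\omega)$ are incomparable; it is a $C_4$-parallelogram-pattern poset if $m_{i,a}(\omega)>m_{j,d}(\omega)$, $m_{i,b}(\omega)>m_{j,c}(\omega)$,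 and $m_{i,b}(\omega)$, $m_{j,d}(\omega)$ are comparable. *)

(* Defs.v *)
(* Positions 1..n of the paper are the ordinals 'I_n (0-based). *)
From mathcomp Require Import all_boot all_fingroup.
Set Implicit Arguments. Unset Strict Implicit. Unset Printing Implicit Defensive.

Definition invb n (w : 'S_n) (i j : 'I_n) : bool := (i < j) && (w j < w i).

Definition cw n (w : 'S_n) (i : 'I_n) : nat := #|[set j : 'I_n | invb w i j]|.

Definition cij n (w : 'S_n) (i j : 'I_n) : nat :=
  #|[set k : 'I_n | (i < k) && (k < j) && (w k < w i)]|.

(* m_{i,x}(w) in N^n; truncated subtraction x - c_{i,j} = max{0, x - c_{i,j}} *)
Definition mvec n (w : 'S_n) (i : 'I_n) (x : nat) : {ffun 'I_n -> nat} :=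
  [ffun j : 'I_n =>
     if j < i then 0
     else if j == i then x
     else if invb w i j then 0
     else x - cij w i j].

Definition vle n (u v : {ffun 'I_n -> nat}) : bool := [forall k, u k <= v k].
Definition vlt n (u v : {ffun 'I_n -> nat}) : bool := (u != v) && vle u v.
Definition vcomparable n (u v : {ffun 'I_n -> nat}) : bool := vle u v || vle v u.

Definition pattern_data n (w : 'S_n) (i j : 'I_n) (a b c d : nat) : Prop :=
  [/\ i < j,
      1 <= b /\ b < a /\ a <= cw w i,
      1 <= c /\ c < d /\ d <= cw w j,
      a + c = b + d
    & vlt (mvec w j d) (mvec w i a) /\ vlt (mvec w j c) (mvec w i b)].

Definition has_parallelogram_pattern n (w : 'S_n) : Prop :=
  exists (i j : 'I_n) (a b c d : nat),
    pattern_data w i j a b c d /\ ~~ vcomparable (mvec w i b) (mvec w j d).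

Definition has_C4_parallelogram_pattern n (w : 'S_n) : Prop :=
  exists (i j : 'I_n) (a b c d : nat),
    pattern_data w i j a b c d /\ vcomparable (mvec w i b) (mvec w j d).

(* Main.v *)
Require Import Defs.
From mathcomp Require Import all_boot all_fingroup.
From mathcomp Require Import zify.

Lemma mvec_lt n (w : 'S_n) (i : 'I_n) x (k : 'I_n) : k < i -> mvec w i x k = 0.
Proof. by move=> h; rewrite /mvec ffunE h. Qed.

Lemma mvec_self n (w : 'S_n) (i : 'I_n) x : mvec w i x i = x.
Proof. by rewrite /mvec ffunE ltnn eqxx. Qed.

Lemma cij_bound n (w : 'S_n) (i j k : 'I_n) : i < j -> w i < w j ->
  cij w i k <= cij w i j + cij w j k.
Proof.
move=> hij hw; rewrite /cij.
set A := [set l : 'I_n | _]; set B := [set l : 'I_n | _]; set D := [set l : 'I_n | _].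
apply: (leq_trans (n := #|B :|: D|)).
  apply: subset_leq_card; apply/subsetP => l; rewrite !inE.
  case/andP => /andP [h1 h2] h3.
  case: (ltngtP l j) => hl.
  - by rewrite h1 h3.
  - by rewrite h2 /= (ltn_trans h3 hw) orbT.
  - by move: h3; rewrite (val_inj hl) ltnNge (ltnW hw).
by rewrite cardsU leq_subr.
Qed.

Lemma le_key n (w : 'S_n) (i j : 'I_n) x y : i < j -> w i < w j ->
  y + cij w i j <= x -> vle (mvec w j y) (mvec w i x).
Proof.
move=> hij hw hxy; apply/forallP => k.
case: (ltngtP k j) => hk.
- by rewrite mvec_lt.
- have hik : (k < i) = false by apply/negbTE; rewrite -leqNgt ltnW // (ltn_trans hij hk).
  have hki : (k == i) = false by apply/negbTE; rewrite neq_ltn (ltn_trans hij hk) orbT.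
  rewrite /mvec !ffunE hik hki ltnNge (ltnW hk) /= ifN_eq; last by rewrite neq_ltn hk orbT.
  rewrite /invb hk /=.
  case: ltnP => //= hwk.
  have hwk' : w j < w k.
    rewrite ltn_neqAle hwk andbT; apply/negP => /eqP /val_inj /perm_inj E.
    by move: hk; rewrite E ltnn.
  have -> : (w k < w i) = false by apply/negbTE; rewrite -leqNgt ltnW // (ltn_trans hw hwk').
  rewrite (ltn_trans hij hk) /=.
  have := @cij_bound _ w i j k hij hw; lia.
- rewrite (val_inj hk) mvec_self /mvec ffunE ltnNge (ltnW hij) /=.
  rewrite ifN_eq; last by rewrite neq_ltn hij orbT.
  rewrite /invb hij /= ltnNge (ltnW hw) /=; lia.
Qed.

Theorem mainTheorem6 (n : nat) (w : 'S_n) :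
  has_C4_parallelogram_pattern w -> has_parallelogram_pattern w.
Proof.
case=> i [j [a [b [c [d [[hij [hb1 [hba hai]] [hc1 [hcd hdj]] habcd [_ _]] hcomp]]]]]].
have hbd : vle (mvec w j d) (mvec w i b).
  case/orP: hcomp => // /forallP /(_ i); rewrite mvec_self mvec_lt //; lia.
move/forallP: hbd => /(_ j).
rewrite mvec_self /mvec ffunE (ltnNge j i) (ltnW hij) /= ifN_eq; last by rewrite neq_ltn hij orbT.
rewrite /invb hij /=.
case: ltnP => hw; first lia.
have hw' : w i < w j.
  rewrite ltn_neqAle hw andbT; apply/negP => /eqP /val_inj /perm_inj E.
  by move: hij; rewrite E ltnn.
move=> hdb.
set C := cij w i j.
have neqi : forall x y, 1 <= x -> mvec w j y != mvec w i x.
  move=> x y hx; apply/negP => /eqP E; move: (congr1 (fun f : {ffun _ -> nat} => f i) E).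
  rewrite mvec_self mvec_lt //; lia.
have notle : forall x y, 1 <= x -> ~~ vle (mvec w i x) (mvec w j y).
  move=> x y hx; apply/negP => /forallP /(_ i); rewrite mvec_self mvec_lt //; lia.
exists i, j, (C.+2), (C.+1), 1, 2; split.
  split => //; try lia.
  split; rewrite /vlt ?neqi //= ?le_key //; lia.
rewrite /vcomparable negb_or notle //=.
apply/negP => /forallP /(_ j).
rewrite mvec_self /mvec ffunE (ltnNge j i) (ltnW hij) /= ifN_eq; last by rewrite neq_ltn hij orbT.
rewrite /invb hij /= (ltnNge (w j) (w i)) (ltnW hw') /=; lia.
Qed.
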